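(* Let $P$ be an irreducible aperiodic row-stochastic $n\times n$ matrix with centrality vector $\pi$. Then for every $z\in[0,1]^n$ the limit $\lim_{t\to\infty}W(z)^t=H(z)$ exists, where $H(z)$ is a row-stochastic matrix such that: (i) if $\mathcal S(z)=\emptyset$, then $H(z)=\mathbf{1}p(z)'$, where $$p(z)=\frac1{\gamma(z)}(I-[z])^{-1}\pi,\qquad \gamma(z)=\sum_{i\in\mathcal V}\frac{\pi_i}{1-z_i};$$ (ii) if $\mathcal S(z)\ne\emptyset$, then $H(z)$ is the unique solution of the linear system $$H_{ij}(z)=\sum_{k\in\mathcal V}P_{ik}H_{kj}(z)\quad\forall i\notin\mathcal S(z),\ j\in\mathcal V;\qquad H_{ij}(z)=\delta^i_j\quad\forall i\in\mathcal S(z),\ j\in\mathcal V,$$ where $\delta^i_j=1$ if $i=j$ and $0$ otherwise.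
   Context: $\mathcal V=\{1,\dots,n\}$. A row-stochastic matrix is a nonnegative square matrix with all row sums equal to $1$. $P$ is irreducible if the graph on $\mathcal V$ with edge $(i,j)$ iff $P_{ij}>0$ is strongly connected, and aperiodic if the gcd of the lengths of the cycles of this graph is $1$. The centrality vector $\pi$ is the unique probability vector with $P'\pi=\pi$ (it satisfies $\pi>0$). For $z\in[0,1]^n$, $[z]$ is the diagonal matrix with diagonal $z$, $W(z)=(I-[z])P+[z]$, and $\mathcal S(z)=\{i\in\mathcal V: z_i=1\}$. *)

(* Defs.v *)
From HB Require Import structures.
From mathcomp Require Import all_boot all_order all_algebra.
From mathcomp Require Import all_classical all_reals all_analysis.
Set Implicit Arguments. Unset Strict Implicit. Unset Printing Implicit Defensive.
Import Order.TTheory GRing.Theory Num.Theory.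
Local Open Scope ring_scope.

Section Defs.
Variables (R : realType) (n : nat).

Definition row_stochastic (A : 'M[R]_n) : Prop :=
  (forall i j, 0 <= A i j) /\ (forall i, \sum_(j < n) A i j = 1).

Definition mx_graph (A : 'M[R]_n) : rel 'I_n := fun i j => 0 < A i j.

Definition irreducible_mx (A : 'M[R]_n) : Prop :=
  forall i j : 'I_n, connect (mx_graph A) i j.

(* a (simple, directed) cycle of the graph, given as the nonempty duplicate-free
   sequence of its vertices; its length is the number of vertices (= edges) *)
Definition graph_cycle (A : 'M[R]_n) (s : seq 'I_n) : bool :=
  [&& s != [::], uniq s & cycle (mx_graph A) s].

Definition aperiodic_mx (A : 'M[R]_n) : Prop :=
  forall d : nat,
    (forall s, graph_cycle A s -> (d %| size s)%N) -> d = 1%N.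

Definition zdiag (z : 'I_n -> R) : 'M[R]_n := diag_mx (\row_i z i).

Definition Wz (P : 'M[R]_n) (z : 'I_n -> R) : 'M[R]_n :=
  (1%:M - zdiag z) *m P + zdiag z.

Definition Sz (z : 'I_n -> R) : {set 'I_n} := [set i | z i == 1].

Definition gammaz (pi : 'cV[R]_n) (z : 'I_n -> R) : R :=
  \sum_(i < n) pi i 0 / (1 - z i).

Definition pz (pi : 'cV[R]_n) (z : 'I_n -> R) : 'cV[R]_n :=
  (gammaz pi z)^-1 *: (invmx (1%:M - zdiag z) *m pi).

Definition solves_system (P : 'M[R]_n) (z : 'I_n -> R) (H : 'M[R]_n) : Prop :=
  (forall i j, i \notin Sz z -> H i j = \sum_(k < n) P i k * H k j) /\
  (forall i j, i \in Sz z -> H i j = (i == j)%:R).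

End Defs.

(* Main.v *)
Require Import Defs.
From HB Require Import structures.
From mathcomp Require Import all_boot all_order all_algebra.
From mathcomp Require Import all_classical all_reals all_analysis.
From mathcomp Require Import ring lra zify.
Import Order.TTheory GRing.Theory Num.Theory.
Import numFieldNormedType.Exports.
Local Open Scope classical_set_scope.
Local Open Scope ring_scope.
Set Implicit Arguments. Unset Strict Implicit. Unset Printing Implicit Defensive.

Section Aux.
Variable R : realType.
Variable n : nat.
Implicit Types A B : 'M[R]_n.

Definition nonneg A := forall i j, 0 <= A i j.

Lemma Wz_entry (P : 'M[R]_n) z i j :
  Wz P z i j = (1 - z i) * P i j + z i * (i == j)%:R.
Proof.
rewrite /Wz /zdiag mxE mulmxBl mul1mx mul_diag_mx !mxE mulr_natr.
by rewrite mulrBl mul1r.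
Qed.

Lemma mulmx_ge_term A B i j k : nonneg A -> nonneg B ->
  A i j * B j k <= (A *m B) i k.
Proof.
move=> hA hB; rewrite mxE (bigD1 j) //= lerDl.
by apply: sumr_ge0 => l _; apply: mulr_ge0.
Qed.

Lemma nonneg_mul A B : nonneg A -> nonneg B -> nonneg (A *m B).
Proof.
move=> hA hB i k; rewrite mxE; apply: sumr_ge0 => l _; exact: mulr_ge0.
Qed.

Lemma nonneg_exp A t : nonneg A -> nonneg (A ^+ t).
Proof.
move=> hA; elim: t => [|t IH]; first by move=> i j; rewrite expr0 mxE; case: (i == j).
by rewrite exprS -mulmxE; apply: nonneg_mul.
Qed.

Lemma stoch_mul A B : row_stochastic A -> row_stochastic B -> row_stochastic (A *m B).
Proof.
move=> [hA sA] [hB sB]; split; first exact: nonneg_mul.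
move=> i; under eq_bigr do rewrite mxE.
rewrite exchange_big /= -[RHS](sA i); apply: eq_bigr => k _.
by rewrite -mulr_sumr sB mulr1.
Qed.

Lemma stoch_exp A t : row_stochastic A -> row_stochastic (A ^+ t).
Proof.
move=> hA; elim: t => [|t IH].
  rewrite expr0; split; first by move=> i j; rewrite mxE; case: (i == j).
  by move=> i; rewrite (bigD1 i) //= big1 ?mxE ?eqxx ?addr0 // => j /negPf; rewrite mxE eq_sym => ->.
by rewrite exprS -mulmxE; apply: stoch_mul.
Qed.

Lemma stoch_le1 A i j : row_stochastic A -> A i j <= 1.
Proof.
move=> [hA sA]; rewrite -(sA i) (bigD1 j) //= lerDl; exact: sumr_ge0.
Qed.

End Aux.
Section AuxB.
Variable R : realType.

Lemma cvg_sumseq (I : Type) (r : seq I) (f : I -> nat -> R) (a : I -> R) :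
  (forall i, f i @ \oo --> a i) ->
  (fun t => \sum_(i <- r) f i t) @ \oo --> \sum_(i <- r) a i.
Proof.
move=> h; elim: r => [|x s IH].
  under eq_cvg do rewrite big_nil. rewrite big_nil; exact: cvg_cst.
under eq_cvg do rewrite big_cons. rewrite big_cons; exact: cvgD.
Qed.

Lemma cvg_cmul (u : nat -> R) (a l : R) : u @ \oo --> l ->
  (fun t => a * u t) @ \oo --> a * l.
Proof. move=> h; exact: cvgMl_tmp. Qed.

Lemma geo_small (c eps : R) : 0 <= c < 1 -> 0 < eps -> exists q : nat, c ^+ q < eps.
Proof.
move=> /andP[c0 c1] e0.
have : (GRing.exp c : R ^nat) @ \oo --> 0 by apply: cvg_expr; rewrite ger0_norm.
move/cvgr0Pnorm_lt => /(_ eps e0) [N _ hN].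
exists N; have := hN N (leqnn N); rewrite /= ger0_norm //; exact: exprn_ge0.
Qed.

Lemma geo_zero (c a : R) : 0 <= c < 1 -> (forall q : nat, `|a| <= c ^+ q) -> a = 0.
Proof.
move=> hc h; apply/eqP; rewrite -normr_eq0; apply/negPn/negP => ha.
have a0 : 0 < `|a| by rewrite lt_def ha normr_ge0.
have [q hq] := @geo_small c `|a| hc a0.
by have := h q; rewrite leNgt hq.
Qed.

Lemma cvg_bounds (u : nat -> R) (c : R) (m : nat) : 0 <= c < 1 ->
  (forall q : nat, exists lo hi, hi - lo <= c ^+ q /\
     forall t, (q * m <= t)%N -> lo <= u t <= hi) ->
  cvg (u @ \oo).
Proof.
move=> hc h; apply/cauchy_cvgP; apply/cauchyP => e e0.
have [q hq] := @geo_small c e hc e0.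
have [lo [hi [hlh hb]]] := h q.
exists lo; exists (q * m)%N => // t /= ht.
have /andP[h1 h2] := hb t ht.
rewrite /ball /= distrC ger0_norm ?subr_ge0 //.
apply: le_lt_trans hq; apply: le_trans hlh; lra.
Qed.

Lemma lim_eq (u : nat -> R) (l : R) : u @ \oo --> l -> limn u = l.
Proof. move=> hu; exact: (cvg_lim _ hu). Qed.

Lemma lim_uniq (u : nat -> R) (l l' : R) : u @ \oo --> l -> u @ \oo --> l' -> l = l'.
Proof. by move=> h1 h2; rewrite -(@lim_eq u l h1) -(@lim_eq u l' h2). Qed.

Lemma lim_in_bounds (u : nat -> R) (l : R) lo hi N : u @ \oo --> l ->
  (forall t, (N <= t)%N -> lo <= u t <= hi) -> lo <= l <= hi.
Proof.
move=> hu hb; rewrite -(@lim_eq u l hu); apply/andP; split.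
  apply: limr_ge; first exact: cvgP hu.
  by exists N => // t /hb /andP[].
apply: limr_le; first exact: cvgP hu.
by exists N => // t /hb /andP[].
Qed.

End AuxB.
Section Semi.
Variable S : nat -> Prop.
Hypothesis S0 : S 0%N.
Hypothesis Sadd : forall a b, S a -> S b -> S (a + b)%N.

Lemma S_mul c a : S a -> S (c * a)%N.
Proof. move=> ha; elim: c => [|c IH]; first by rewrite mul0n. by rewrite mulSn; apply: Sadd. Qed.

Lemma S_gcd (I : Type) (r : seq I) (Pr : pred I) (F : I -> nat) :
  (forall i, Pr i -> S (F i)) ->
  exists x, S x /\ S (x + \big[gcdn/0%N]_(i <- r | Pr i) F i)%N.
Proof.
move=> hF; elim/big_rec: _ => [|i g Pi [x [hx hxg]]].
  by exists 0%N; rewrite addn0.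
have SA := hF i Pi.
case: (posnP (F i)) => [A0|Apos].
  by rewrite A0 gcd0n; exists x.
have [a _ hdvd] := Bezoutl g Apos.
exists (a * (x + g))%N; split; first exact: S_mul.
have -> : (a * (x + g) + gcdn (F i) g = a * x + (gcdn (F i) g + a * g))%N.
  by rewrite mulnDr -addnA [(_ + gcdn _ _)%N]addnC.
rewrite -(divnK hdvd); apply: Sadd; exact: S_mul.
Qed.

Lemma S_large x : S x -> S (x + 1)%N -> forall N, (x * x <= N)%N -> S N.
Proof.
move=> hx hx1 N hN.
case: (posnP x) => [x0|xpos].
  by rewrite -(muln1 N); apply: S_mul; move: hx1; rewrite x0.
have hq : (x <= N %/ x)%N by rewrite -{1}(mulnK x xpos) leq_div2r.
have hr : (N %% x <= N %/ x)%N by apply: leq_trans hq; apply: ltnW; rewrite ltn_mod.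
have -> : N = ((N %/ x - N %% x) * x + N %% x * (x + 1))%N.
  rewrite mulnBl mulnDr muln1 addnA subnK; first exact: divn_eq.
  by apply: leq_mul.
apply: Sadd; exact: S_mul.
Qed.
End Semi.

Section Prim.
Variable R : realType.
Variable n : nat.
Variable A : 'M[R]_n.
Hypothesis hA : forall i j, 0 <= A i j.

Definition pw (l : nat) i j : bool := 0 < (A ^+ l) i j.

Lemma nonneg_expA t i j : 0 <= (A ^+ t) i j.
Proof.
elim: t i j => [|t IH] i j; first by rewrite expr0 mxE; case: (i == j).
rewrite exprS -mulmxE mxE; apply: sumr_ge0 => l _; exact: mulr_ge0.
Qed.

Lemma pw0 i : pw 0 i i.
Proof. by rewrite /pw expr0 mxE eqxx ltr01. Qed.

Lemma pw_add a b i j k : pw a i j -> pw b j k -> pw (a + b) i k.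
Proof.
rewrite /pw exprD -mulmxE => h1 h2.
apply: (lt_le_trans (mulr_gt0 h1 h2)).
rewrite mxE (bigD1 j) //= lerDl; apply: sumr_ge0 => l _.
apply: mulr_ge0; exact: nonneg_expA.
Qed.

Lemma pw_path x p : path (mx_graph A) x p -> pw (size p) x (last x p).
Proof.
elim: p x => [|y p IH] x /=; first by move=> _; exact: pw0.
move=> /andP[hxy hp]; rewrite -add1n; apply: pw_add (IH _ hp).
by rewrite /pw expr1.
Qed.

Lemma uniq_size_le (s : seq 'I_n) : uniq s -> (size s <= n)%N.
Proof.
move=> hu; have := uniq_leq_size hu (_ : {subset s <= enum 'I_n}).
by rewrite size_enum_ord; apply => y _; rewrite mem_enum.
Qed.

Lemma pw_connect x y : connect (mx_graph A) x y -> exists l, (l < n)%N /\ pw l x y.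
Proof.
move/connectP => [p hp ->]; case/shortenP: hp => p' hp' hu _.
exists (size p'); split; last exact: pw_path.
by have := uniq_size_le hu.
Qed.

Lemma primitive (v : 'I_n) : irreducible_mx A -> aperiodic_mx A ->
  exists m, forall i j, pw m i j.
Proof.
move=> hirr hap.
pose g := \big[gcdn/0%N]_(l < (3 * n).+1 | pw l v v) (l : nat).
have gdvd : forall l, (l <= 3 * n)%N -> pw l v v -> (g %| l)%N.
  move=> l hl hpw; rewrite /g (bigD1 (Ordinal (hl : (l < (3 * n).+1)%N))) //=.
  exact: dvdn_gcdl.
have g1 : g = 1%N.
  apply: hap => s /and3P[sne su sc].
  case: s sne su sc => [//|u p] _ su sc.
  have hc : pw (size (u :: p)) u u.
    by move: sc => /= /pw_path; rewrite size_rcons last_rcons.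
  have cle : ((size p).+1 <= n)%N := uniq_size_le su.
  have [a [ha hpa]] := pw_connect (hirr v u).
  have [b [hb hpb]] := pw_connect (hirr u v).
  have h1 : (g %| a + b)%N by apply: gdvd; [lia | exact: pw_add hpa hpb].
  have h2 : (g %| a + (size (u :: p) + b))%N.
    by apply: gdvd; [rewrite /=; lia | exact: pw_add hpa (pw_add hc hpb)].
  by move: h2; rewrite addnCA dvdn_addl.
have [x [hx hxg]] := @S_gcd (fun l => pw l v v) (pw0 v)
   (fun a b h1 h2 => pw_add h1 h2) _ (index_enum 'I_(3 * n).+1)
   (fun l : 'I_(3 * n).+1 => pw l v v) (fun l => nat_of_ord l) (fun i h => h).
rewrite -/g g1 in hxg.
have hlarge := @S_large (fun l => pw l v v) (pw0 v) (fun a b h1 h2 => pw_add h1 h2) x hx hxg.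
exists (n + x * x + n)%N => i j.
have [a [ha hpa]] := pw_connect (hirr i v).
have [b [hb hpb]] := pw_connect (hirr v j).
have hmid := hlarge (n + x * x + n - a - b)%N (ltac:(lia)).
have := pw_add hpa (pw_add hmid hpb).
have -> : (a + (n + x * x + n - a - b + b) = n + x * x + n)%N by lia.
done.
Qed.
End Prim.
Section Aux2.
Variable R : realType.

Lemma fin_min (T : finType) (f : T -> R) : (forall x, 0 < f x) ->
  exists d, 0 < d /\ forall x, d <= f x.
Proof.
move=> hf.
suff [d [d0 hd]] : exists d, 0 < d /\ forall x, x \in enum T -> d <= f x.
  by exists d; split => // x; apply: hd; rewrite mem_enum.
elim: (enum T) => [|a s [d [d0 hd]]]; first by exists 1; split.
exists (Num.min (f a) d); split; first by rewrite lt_min hf d0.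
move=> x; rewrite inE => /orP[/eqP ->|hx]; first by rewrite ge_min lexx.
by rewrite ge_min (hd x hx) orbT.
Qed.

Variable n : nat.

Lemma avg_bounds (A : 'M[R]_n) (v : 'I_n -> R) lo hi i :
  row_stochastic A -> (forall k, lo <= v k <= hi) ->
  lo <= \sum_k A i k * v k <= hi.
Proof.
move=> [hA sA] hv; apply/andP; split.
  rewrite -[lo]mul1r -(sA i) mulr_suml; apply: ler_sum => k _.
  by apply: ler_wpM2l => //; case/andP: (hv k).
rewrite -[hi]mul1r -(sA i) mulr_suml; apply: ler_sum => k _.
by apply: ler_wpM2l => //; case/andP: (hv k).
Qed.

Lemma contract_bounds (A : 'M[R]_n) (v : 'I_n -> R) lo hi d j0 i :
  row_stochastic A -> (forall a b, d <= A a b) -> (forall k, lo <= v k <= hi) ->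
  (1 - d) * lo + d * v j0 <= \sum_k A i k * v k <= d * v j0 + (1 - d) * hi.
Proof.
move=> [hA sA] hd hv.
have s1 := sA i; rewrite (bigD1 j0) //= in s1.
rewrite (bigD1 j0) //=.
set S' := \sum_(k | k != j0) A i k in s1.
have s3 : \sum_(k | k != j0) A i k * v k <= S' * hi.
  rewrite /S' mulr_suml; apply: ler_sum => k _.
  by apply: ler_wpM2l => //; case/andP: (hv k).
have s4 : S' * lo <= \sum_(k | k != j0) A i k * v k.
  rewrite /S' mulr_suml; apply: ler_sum => k _.
  by apply: ler_wpM2l => //; case/andP: (hv k).
have /andP[l1 l2] := hv j0.
have e1 : 0 <= (A i j0 - d) * (hi - v j0) by apply: mulr_ge0; rewrite subr_ge0 // hd.
have e2 : 0 <= (A i j0 - d) * (v j0 - lo) by apply: mulr_ge0; rewrite subr_ge0 // hd.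
have eS : S' = 1 - A i j0 by rewrite -s1 addrC addrK.
rewrite eS in s3 s4.
apply/andP; split; nra.
Qed.

End Aux2.

Section Main.
Variable R : realType.
Variable n : nat.
Variable P : 'M[R]_n.
Variable z : 'I_n -> R.
Hypothesis hP : row_stochastic P.
Hypothesis hz : forall i, 0 <= z i <= 1.

Local Notation W := (Wz P z).

Lemma sum_delta (x : 'I_n -> R) i : \sum_k (i == k)%:R * x k = x i.
Proof.
rewrite (bigD1 i) //= eqxx mul1r big1 ?addr0 // => k /negPf.
by rewrite eq_sym => ->; rewrite mul0r.
Qed.

Lemma sum_W_expand (x : 'I_n -> R) i :
  \sum_k W i k * x k = (1 - z i) * \sum_k P i k * x k + z i * x i.
Proof.
under eq_bigr do rewrite Wz_entry mulrDl -mulrA -mulrA.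
by rewrite big_split /= -!mulr_sumr sum_delta.
Qed.

Lemma W_stoch : row_stochastic W.
Proof.
case: hP => [hP0 hP1]; split.
  move=> i j; rewrite Wz_entry; have /andP[z0 z1] := hz i.
  by apply: addr_ge0; apply: mulr_ge0 => //; rewrite ?subr_ge0 // ?ler0n.
move=> i; have := sum_W_expand (fun _ => 1) i.
by under eq_bigr do rewrite mulr1; move=> ->; under eq_bigr do rewrite mulr1; rewrite hP1; ring.
Qed.

Lemma Wt_stoch t : row_stochastic (W ^+ t).
Proof. exact: stoch_exp W_stoch. Qed.

Lemma Wt_bounds t i j : 0 <= (W ^+ t) i j <= 1.
Proof.
have hs := Wt_stoch t; case: (hs) => h0 _.
by rewrite h0 stoch_le1.
Qed.

Lemma W_exprD s t i j : (W ^+ (s + t)) i j = \sum_k (W ^+ s) i k * (W ^+ t) k j.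
Proof. by rewrite exprD -mulmxE mxE. Qed.

End Main.
Section Case1.
Variable R : realType.
Variable n : nat.
Variable P : 'M[R]_n.
Variable z : 'I_n -> R.
Hypothesis hP : row_stochastic P.
Hypothesis hz : forall i, 0 <= z i <= 1.
Hypothesis hirr : irreducible_mx P.
Hypothesis hap : aperiodic_mx P.
Hypothesis hz1 : forall i, z i < 1.
Variable v : 'I_n.

Local Notation W := (Wz P z).

Lemma graph_sub : subrel (mx_graph P) (mx_graph W).
Proof.
move=> i j; rewrite /mx_graph Wz_entry => hp.
have /andP[z0 _] := hz i.
apply: (lt_le_trans (mulr_gt0 (_ : 0 < 1 - z i) hp)); first by rewrite subr_gt0.
by rewrite lerDl; apply: mulr_ge0 => //; case: (i == j).
Qed.

Lemma W_irr : irreducible_mx W.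
Proof.
move=> i j; apply: (connect_sub (e := mx_graph P)) ; last exact: hirr.
by move=> x y /graph_sub; apply: connect1.
Qed.

Lemma W_ap : aperiodic_mx W.
Proof.
move=> d hd; apply: hap => s /and3P[s1 s2 s3]; apply: hd.
by rewrite /graph_cycle s1 s2 (sub_cycle graph_sub s3).
Qed.

Lemma case1_conv : forall j, exists l : R, forall i,
  (fun t : nat => (W ^+ t) i j) @ \oo --> l.
Proof.
have [hW0 _] := W_stoch hP hz.
have [m hm] := primitive hW0 v W_irr W_ap.
have [d [d0 hd]] := @fin_min R _ (fun p : 'I_n * 'I_n => (W ^+ m) p.1 p.2) (fun p => hm p.1 p.2).
have d1 : d <= 1 by apply: le_trans (hd (v, v)) _; case/andP: (Wt_bounds hP hz m v v).
set c := 1 - d.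
have hc : 0 <= c < 1 by apply/andP; split; rewrite /c; lra.
move=> j.
have claim : forall q : nat, exists lo hi, hi - lo <= c ^+ q /\
    forall i, lo <= (W ^+ (q * m)) i j <= hi.
  elim=> [|q [lo [hi [hlh hb]]]].
    by exists 0, 1; split; [rewrite expr0 subr0 | move=> i; exact: Wt_bounds].
  exists ((1 - d) * lo + d * (W ^+ (q * m)) v j), (d * (W ^+ (q * m)) v j + (1 - d) * hi).
  split.
    have -> : d * (W ^+ (q * m)) v j + (1 - d) * hi - ((1 - d) * lo + d * (W ^+ (q * m)) v j)
       = c * (hi - lo) by rewrite /c; ring.
    rewrite exprS; apply: ler_wpM2l => //; by case/andP: hc.
  move=> i; rewrite mulSn W_exprD.
  apply: contract_bounds => //; first exact: Wt_stoch.
  by move=> a b; exact: (hd (a, b)).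
have claim2 : forall q : nat, exists lo hi, hi - lo <= c ^+ q /\
    forall i t, (q * m <= t)%N -> lo <= (W ^+ t) i j <= hi.
  move=> q; have [lo [hi [hlh hb]]] := claim q; exists lo, hi; split => // i t ht.
  rewrite -(subnK ht) W_exprD; apply: avg_bounds => //; exact: Wt_stoch.
have hcv : forall i, cvg ((fun t : nat => (W ^+ t) i j) @ \oo).
  move=> i; apply: (@cvg_bounds R _ c m hc) => q.
  have [lo [hi [hlh hb]]] := claim2 q; exists lo, hi; split => // t ht; exact: hb.
exists (limn (fun t : nat => (W ^+ t) v j)) => i.
have hi := hcv i; have hv := hcv v.
suff -> : limn (fun t : nat => (W ^+ t) v j) = limn (fun t : nat => (W ^+ t) i j) by [].
apply/eqP; rewrite -subr_eq0; apply/eqP; apply: (@geo_zero R c _ hc) => q.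
have [lo [hi' [hlh hb]]] := claim2 q.
have /andP[a1 a2] := lim_in_bounds hv (hb v).
have /andP[b1 b2] := lim_in_bounds hi (hb i).
rewrite ler_norml; apply/andP; split; lra.
Qed.

End Case1.
Section Case2.
Variable R : realType.
Variable n : nat.
Variable P : 'M[R]_n.
Variable z : 'I_n -> R.
Hypothesis hP : row_stochastic P.
Hypothesis hz : forall i, 0 <= z i <= 1.
Hypothesis hirr : irreducible_mx P.
Variable s0 : 'I_n.
Hypothesis hs0 : s0 \in Sz z.

Local Notation W := (Wz P z).
Local Notation S := (Sz z).

Lemma inS s : (s \in S) = (z s == 1).
Proof. by rewrite inE. Qed.

Lemma W_rowS s k : s \in S -> W s k = (s == k)%:R.
Proof. by rewrite inS Wz_entry => /eqP ->; rewrite subrr mul0r add0r mul1r. Qed.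

Lemma Wt_rowS s t j : s \in S -> (W ^+ t) s j = (s == j)%:R.
Proof.
move=> hs; elim: t j => [|t IH] j; first by rewrite expr0 mxE.
rewrite exprS -mulmxE mxE.
under eq_bigr do rewrite W_rowS //.
by rewrite sum_delta.
Qed.

Lemma reach_path x p : path (mx_graph P) x p -> last x p \in S ->
  exists k s, [/\ (k <= size p)%N, s \in S & 0 < (W ^+ k) x s].
Proof.
elim: p x => [|y p IH] x /=.
  by move=> _ hx; exists 0%N, x; rewrite expr0 mxE eqxx ltr01.
move=> /andP[hxy hp] hl.
case hxS: (x \in S).
  by exists 0%N, x; rewrite hxS expr0 mxE eqxx ltr01.
have [k [s [hk hs hpos]]] := IH y hp hl.
exists k.+1, s; split => //.
have hWxy : 0 < W x y.
  rewrite Wz_entry; have /andP[z0 z1] := hz x.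
  have zx : z x < 1 by rewrite lt_neqAle z1 andbT -inS hxS.
  apply: (lt_le_trans (mulr_gt0 (_ : 0 < 1 - z x) hxy)); first by rewrite subr_gt0.
  by rewrite lerDl; apply: mulr_ge0 => //; case: (x == y).
have [hW0 _] := W_stoch hP hz.
rewrite exprS -mulmxE; apply: (lt_le_trans (mulr_gt0 hWxy hpos)).
apply: mulmx_ge_term => //; exact: nonneg_exp.
Qed.

Lemma reach i : exists s, s \in S /\ 0 < (W ^+ n) i s.
Proof.
have [hW0 _] := W_stoch hP hz.
move/connectP: (hirr i s0) => [p hp hl]; move: (hs0); rewrite hl.
case/shortenP: hp => p' hp' hu _ hs1.
have [k [s [hk hs hpos]]] := reach_path hp' hs1.
exists s; split => //.
have hkn : (k <= n)%N.
  apply: leq_trans hk _; apply: ltnW; by have := uniq_size_le hu.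
have -> : W ^+ n = W ^+ k *m W ^+ (n - k) by rewrite mulmxE -exprD subnKC.
apply: (lt_le_trans (_ : 0 < (W ^+ k) i s * (W ^+ (n - k)) s s)).
  by rewrite [X in _ * X]Wt_rowS // eqxx mulr1.
by apply: mulmx_ge_term; exact: nonneg_exp.
Qed.

Definition rr t i := \sum_(j | j \notin S) (W ^+ t) i j.

Lemma rr_bounds t i : 0 <= rr t i <= 1.
Proof.
have [h0 h1] := Wt_stoch hP hz t.
rewrite /rr sumr_ge0 //= -(h1 i) [X in _ <= X](bigID (fun j => j \notin S)) /= lerDl.
exact: sumr_ge0.
Qed.

Lemma rr_S t s : s \in S -> rr t s = 0.
Proof.
move=> hs; rewrite /rr big1 // => j hj; rewrite Wt_rowS //.
by case: eqP => // e; rewrite -e hs in hj.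
Qed.

Lemma rr_step t u i : rr (t + u) i = \sum_k (W ^+ t) i k * rr u k.
Proof.
rewrite /rr; under eq_bigr do rewrite W_exprD.
rewrite exchange_big /=; apply: eq_bigr => k _; by rewrite mulr_sumr.
Qed.

Lemma term_le_rr t i j : j \notin S -> (W ^+ t) i j <= rr t i.
Proof.
move=> hj; rewrite /rr (bigD1 j) //= lerDl; apply: sumr_ge0 => k _.
by case/andP: (Wt_bounds hP hz t i k).
Qed.

Lemma case2_conv :
  (forall i j, exists l : R, (fun t : nat => (W ^+ t) i j) @ \oo --> l) /\
  (forall i j, j \notin S -> (fun t : nat => (W ^+ t) i j) @ \oo --> 0).
Proof.
have [hW0 _] := W_stoch hP hz.
have hf : forall i, 0 < \sum_(j | j \in S) (W ^+ n) i j.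
  move=> i; have [s [hs hpos]] := reach i.
  rewrite (bigD1 s) //=; apply: (lt_le_trans hpos); rewrite lerDl.
  by apply: sumr_ge0 => k _; exact: nonneg_exp.
have [d [d0 hd]] := fin_min hf.
have hrn : forall i, rr n i <= 1 - d.
  move=> i; have [_ h1] := Wt_stoch hP hz n; have := h1 i.
  rewrite (bigID (fun j => j \in S)) /= => e; have := hd i; rewrite /rr; lra.
have d1 : d <= 1 by have := hrn s0; have := rr_bounds n s0; lra.
set c := 1 - d.
have hc : 0 <= c < 1 by apply/andP; split; rewrite /c; lra.
have claim : forall q t, (q * n <= t)%N -> forall i, rr t i <= c ^+ q.
  elim=> [|q IH] t ht i; first by rewrite expr0; case/andP: (rr_bounds t i).
  rewrite mulSn in ht.
  have -> : t = (n + (t - n))%N by lia.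
  have hIH : forall k, 0 <= rr (t - n) k <= c ^+ q.
    by move=> k; rewrite (IH (t - n)%N ltac:(lia) k) andbT; case/andP: (rr_bounds (t - n) k).
  rewrite rr_step (bigID (fun k => k \in S)) /= big1 ?add0r; last first.
    by move=> k hk; rewrite rr_S // mulr0.
  apply: (@le_trans _ _ (\sum_(k | k \notin S) (W ^+ n) i k * c ^+ q)).
    apply: ler_sum => k _; apply: ler_wpM2l; first exact: nonneg_exp.
    by case/andP: (hIH k).
  rewrite -mulr_suml exprS; apply: ler_wpM2r; first exact: exprn_ge0 (proj1 (andP hc)).
  exact: hrn.
have h0 : forall i j, j \notin S -> (fun t : nat => (W ^+ t) i j) @ \oo --> 0.
  move=> i j hj.
  have hb2 : forall (q : nat) t, (q * n <= t)%N -> 0 <= (W ^+ t) i j <= c ^+ q.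
    move=> q t ht; case/andP: (Wt_bounds hP hz t i j) => -> _ /=.
    exact: le_trans (term_le_rr t i hj) (claim q t ht i).
  have hb : forall q : nat, exists lo hi, hi - lo <= c ^+ q /\
      forall t, (q * n <= t)%N -> lo <= (W ^+ t) i j <= hi.
    by move=> q; exists 0, (c ^+ q); split; [rewrite subr0 | exact: hb2].
  have hcv := @cvg_bounds R _ c n hc hb.
  suff e : limn (fun t : nat => (W ^+ t) i j) = 0 by rewrite -e.
  apply: (@geo_zero R c _ hc) => q.
  have /andP[a1 a2] := lim_in_bounds hcv (hb2 q).
  by rewrite ger0_norm.
split => // i j.
case: (boolP (j \in S)) => hj; last by exists 0; exact: h0.
exists (sup (range (fun t : nat => (W ^+ t) i j))); apply: nondecreasing_cvgn.
  apply/nondecreasing_seqP => t.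
  rewrite exprSr -mulmxE; apply: (le_trans _ (mulmx_ge_term i j j (nonneg_exp t hW0) hW0)).
  by rewrite W_rowS // eqxx mulr1.
by exists 1 => _ [t _ <-]; case/andP: (Wt_bounds hP hz t i j).
Qed.

End Case2.
Lemma inv_diag_z (R : realType) (n : nat) (z : 'I_n -> R) :
  (forall i, 1 - z i != 0) ->
  invmx (1%:M - zdiag z) = diag_mx (\row_k (1 - z k)^-1).
Proof.
move=> hz.
set D := 1%:M - zdiag z; set E := diag_mx _.
have hDE : D *m E = 1%:M.
  apply/matrixP => i j; rewrite mul_mx_diag !mxE.
  case: (eqVneq i j) => [->|ne]; last by rewrite mulr0n subr0 mul0r.
  by rewrite /= mulr1n (mulfV (hz j)).
have [hu _] := mulmx1_unit hDE.
by rewrite -[invmx D]mulmx1 -hDE mulmxA mulVmx // mul1mx.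
Qed.

Unset Implicit Arguments. Set Strict Implicit.

Theorem lemma1 (R : realType) (n : nat) (P : 'M[R]_n) (pi : 'cV[R]_n)
  (hP : row_stochastic P) (hirr : irreducible_mx P) (hap : aperiodic_mx P)
  (hpi_nn : forall i, 0 <= pi i 0) (hpi_sum : \sum_(i < n) pi i 0 = 1)
  (hpi_inv : P^T *m pi = pi)
  (z : 'I_n -> R) (hz : forall i, 0 <= z i <= 1) :
  exists H : 'M[R]_n,
    (forall i j, (fun t : nat => ((Wz P z) ^+ t) i j) @ \oo --> H i j) /\
    row_stochastic H /\
    (Sz z = finset.set0 -> H = const_mx 1 *m (pz pi z)^T) /\
    (Sz z != finset.set0 ->
       solves_system P z H /\
       (forall H' : 'M[R]_n, solves_system P z H' -> H' = H)).
Proof.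
have hWs := W_stoch hP hz.
have [v _] : exists v : 'I_n, true.
  case: (pickP (fun _ : 'I_n => true)) => [v _|h]; first by exists v.
  exfalso; move: hpi_sum; rewrite big1 => [|i _]; last by have := h i.
  by move/eqP; rewrite eq_sym oner_eq0.
have hz1of : Sz z = finset.set0 -> forall i, z i < 1.
  move=> hS i; have /andP[_ z1] := hz i; rewrite lt_neqAle z1 andbT.
  apply/negP => /eqP e; have : i \in Sz z by rewrite inE e.
  by rewrite hS inE.
have conv : forall i j, exists l : R, (fun t : nat => (Wz P z ^+ t) i j) @ \oo --> l.
  case: (boolP (Sz z == finset.set0)) => hS.
    move=> i j; have [l hl] := case1_conv hP hz hirr hap (hz1of (eqP hS)) v j.
    by exists l; exact: hl i.
  have [s0 hs0] : exists s0, s0 \in Sz z by apply/finset.set0Pn.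
  by case: (case2_conv hP hz hirr hs0).
pose H := \matrix_(i, j) limn (fun t : nat => (Wz P z ^+ t) i j).
have hH : forall i j, (fun t : nat => (Wz P z ^+ t) i j) @ \oo --> H i j.
  move=> i j; rewrite mxE; have [l hl] := conv i j; exact: cvgP hl.
have hHs : row_stochastic H.
  split.
    move=> i j.
    have /andP[a _] := lim_in_bounds (hH i j) (fun t (_ : (0 <= t)%N) => Wt_bounds hP hz t i j).
    exact: a.
  move=> i.
  have h1 := @cvg_sumseq R 'I_n (index_enum 'I_n) (fun j t => (Wz P z ^+ t) i j)
    (fun j => H i j) (fun j => hH i j).
  have e : (fun t => \sum_(j <- index_enum 'I_n) (Wz P z ^+ t) i j) = (fun _ => 1).
    by apply: funext => t; exact: (Wt_stoch hP hz t).2 i.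
  rewrite e in h1; apply: (lim_uniq h1); exact: cvg_cst.
have hWH : forall i j, H i j = \sum_k Wz P z i k * H k j.
  move=> i j.
  have h1 : (fun t => (Wz P z ^+ t.+1) i j) @ \oo --> H i j.
    have := hH i j; rewrite -cvg_shiftS; exact.
  have h2 : (fun t => (Wz P z ^+ t.+1) i j) @ \oo --> \sum_k Wz P z i k * H k j.
    have e : (fun t => (Wz P z ^+ t.+1) i j) =
        (fun t => \sum_(k <- index_enum 'I_n) Wz P z i k * (Wz P z ^+ t) k j).
      by apply: funext => t; rewrite exprS -mulmxE mxE.
    rewrite e; apply: (@cvg_sumseq R 'I_n (index_enum 'I_n)
       (fun k t => Wz P z i k * (Wz P z ^+ t) k j) (fun k => Wz P z i k * H k j)).
    move=> k; exact: cvg_cmul (hH k j).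
  exact: lim_uniq h1 h2.
exists H; split => //; split => //; split.
  move=> hS; have hz1 := hz1of hS.
  have hz0 : forall k, 1 - z k != 0 by move=> k; rewrite subr_eq0 eq_sym (lt_eqF (hz1 k)).
  have hcol : forall i j, H i j = H v j.
    move=> i j; have [l hl] := case1_conv hP hz hirr hap hz1 v j.
    by rewrite (lim_uniq (hH i j) (hl i)) (lim_uniq (hH v j) (hl v)).
  set g := gammaz pi z.
  have hg : 1 <= g.
    rewrite -hpi_sum /g /gammaz; apply: ler_sum => k _.
    have /andP[z0 z1] := hz k; have := hz1 k => zk.
    rewrite ler_pdivlMr ?subr_gt0 //; have := hpi_nn k; nra.
  have hg0 : g != 0 by apply/negP => /eqP e; rewrite e in hg; lra.
  pose p k := g^-1 * ((1 - z k)^-1 * pi k 0).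
  have hp : forall k, pz pi z k 0 = p k.
    by move=> k; rewrite /pz inv_diag_z // mul_diag_mx !mxE.
  have hpsum : \sum_k p k = 1.
    rewrite /p -mulr_sumr.
    have -> : \sum_k (1 - z k)^-1 * pi k 0 = g.
      by rewrite /g /gammaz; apply: eq_bigr => k _; rewrite mulrC.
    exact: mulVf hg0.
  have hpinv : forall j, \sum_k P k j * pi k 0 = pi j 0.
    move=> j; have := congr1 (fun M : 'cV[R]_n => M j 0) hpi_inv; rewrite mxE => <-.
    by apply: eq_bigr => k _; rewrite mxE.
  have step1 : forall j, \sum_k p k * Wz P z k j = p j.
    move=> j.
    have e : forall k, p k * Wz P z k j = g^-1 * (P k j * pi k 0) + (p k * z k) * (k == j)%:R.
      move=> k; rewrite Wz_entry /p; field; by rewrite hz0 hg0.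
    rewrite (eq_bigr _ (fun k _ => e k)) big_split /= -mulr_sumr hpinv.
    under eq_bigr do rewrite mulrC eq_sym.
    rewrite sum_delta /p; field; by rewrite hz0 hg0.
  have stepT : forall t j, \sum_k p k * (Wz P z ^+ t) k j = p j.
    elim=> [|t IH] j.
      under eq_bigr do rewrite expr0 mxE mulrC eq_sym.
      exact: sum_delta.
    under eq_bigr do rewrite exprSr -mulmxE mxE mulr_sumr.
    rewrite exchange_big /=.
    under eq_bigr do under eq_bigr do rewrite mulrA.
    under eq_bigr do rewrite -mulr_suml IH.
    exact: step1.
  have limH : forall j, \sum_k p k * H k j = p j.
    move=> j.
    have h1 := @cvg_sumseq R 'I_n (index_enum 'I_n) (fun k t => p k * (Wz P z ^+ t) k j)
      (fun k => p k * H k j) (fun k => cvg_cmul (a := p k) (hH k j)).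
    have e : (fun t => \sum_(k <- index_enum 'I_n) p k * (Wz P z ^+ t) k j) = (fun _ => p j).
      by apply: funext => t; exact: stepT.
    rewrite e in h1; apply: (lim_uniq h1); exact: cvg_cst.
  have key : forall i j, H i j = p j.
    move=> i j; rewrite hcol -(limH j).
    under eq_bigr => k _ do rewrite (hcol k j).
    by rewrite -mulr_suml hpsum mul1r.
  apply/matrixP => i j.
  have -> : (const_mx 1 *m (pz pi z)^T) i j = pz pi z j 0.
    by rewrite mxE big_ord1 [const_mx _ _ _]mxE [trmx _ _ _]mxE mul1r.
  by rewrite key hp.
move=> hS.
have [s0 hs0] : exists s0, s0 \in Sz z by apply/finset.set0Pn.
have [_ h0] := case2_conv hP hz hirr hs0.
have hsol : solves_system P z H.
  split.
    move=> i j hi.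
    have e := hWH i j; rewrite sum_W_expand in e.
    have hz0 : 1 - z i != 0 by rewrite subr_eq0 eq_sym; move: hi; rewrite inE.
    set X := \sum_k P i k * H k j in e *.
    have : (1 - z i) * (H i j - X) = 0 by rewrite mulrBr; lra.
    move/eqP; rewrite mulf_eq0 (negPf hz0) /= subr_eq0; exact/eqP.
  move=> i j hi.
  have e : (fun t => (Wz P z ^+ t) i j) = (fun _ => (i == j)%:R).
    by apply: funext => t; exact: Wt_rowS.
  have h1 := hH i j; rewrite e in h1; apply: (lim_uniq h1); exact: cvg_cst.
split => // H' [h1 h2].
case: hsol => [g1 g2].
pose D i j := H' i j - H i j.
have hDS : forall k j, k \in Sz z -> D k j = 0 by move=> k j hk; rewrite /D h2 // g2 // subrr.
have hDW : forall i j, D i j = \sum_k Wz P z i k * D k j.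
  move=> i j; rewrite sum_W_expand.
  case: (boolP (i \in Sz z)) => hi.
    have -> : z i = 1 by move: hi; rewrite inE => /eqP.
    by rewrite subrr mul0r add0r mul1r.
  have -> : \sum_k P i k * D k j = D i j.
    rewrite /D; under eq_bigr do rewrite mulrBr.
    by rewrite sumrB -h1 // -g1.
  ring.
have hDt : forall t i j, D i j = \sum_k (Wz P z ^+ t) i k * D k j.
  elim=> [|t IH] i j.
    under eq_bigr do rewrite expr0 mxE.
    by rewrite sum_delta.
  under eq_bigr do rewrite exprS -mulmxE mxE mulr_suml.
  rewrite exchange_big /=.
  under eq_bigr do under eq_bigr do rewrite -mulrA.
  under eq_bigr do rewrite -mulr_sumr -IH.
  exact: hDW.
have hDH : forall i j, D i j = \sum_k D k j * H i k.
  move=> i j.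
  have hc := @cvg_sumseq R 'I_n (index_enum 'I_n) (fun k t => D k j * (Wz P z ^+ t) i k)
      (fun k => D k j * H i k) (fun k => cvg_cmul (a := D k j) (hH i k)).
  have e : (fun t => \sum_(k <- index_enum 'I_n) D k j * (Wz P z ^+ t) i k) = (fun _ => D i j).
    apply: funext => t; rewrite (hDt t i j); apply: eq_bigr => k _; exact: mulrC.
  rewrite e in hc; symmetry; apply: (lim_uniq hc); exact: cvg_cst.
apply/matrixP => i j.
apply/eqP; rewrite -subr_eq0; apply/eqP.
rewrite -/(D i j) hDH big1 // => k _.
case: (boolP (k \in Sz z)) => hk; first by rewrite hDS // mul0r.
by rewrite (lim_uniq (hH i k) (h0 i k hk)) mulr0.
Qed.
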